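(* Let $\mathcal I$ be the poset of open connected intervals of $S^1$ whose closure is properly contained in $S^1$, ordered by inclusion. Every $\mathrm{C}^*$-net bundle $(\mathcal A,\jmath)_{\mathcal I}$ over $\mathcal I$ whose Čech cocycle is globally defined is trivial.
   Context: A $\mathrm{C}^*$-net bundle $(\mathcal A,\jmath)_K$ over a poset $K$: unital $\mathrm{C}^*$-algebras $\mathcal A_o$ ($o\in K$) and ${}^*$-isomorphisms $\jmath_{oa}:\mathcal A_a\to\mathcal A_o$ ($a\le o$) with $\jmath_{oa}\circ\jmath_{ae}=\jmath_{oe}$. It is trivial if there are ${}^*$-isomorphisms $\phi_o:\mathcal A_o\to\mathrm A$ onto a fixed $\mathrm{C}^*$-algebra with $\phi_o\circ\jmath_{oa}=\phi_a$ for all $a\le o$ (isomorphism with the constant net bundle). For nonempty $F\subseteq K$ and $o,\tilde o\in K$ with every element of $F$ below both $o$ and $\tilde o$, $(F;\tilde o,o)$ is a $1$-simplex of the simplicial set $\Sigma^\circ_*(K)$ (whose $n$-simplices are strings $(F;o_{n+1},\dots,o_1)$ with $F$ nonempty and every element of $F$ below every $o_i$). $\mathcal A^F_o$ is the $\mathrm{C}^*$-subalgebra of $\mathcal A_o$ generated by the $\jmath_{oa}(\mathcal A_a)$, $a\in F$. The Čech cocycle is defined on $(F;\tilde o,o)$ if there is a ${}^*$-isomorphism $\zeta^F_{\tilde oo}:\mathcal A^F_o\to\mathcal A^F_{\tilde o}$ with $\zeta^F_{\tilde oo}\circ\jmath_{oa}=\jmath_{\tilde oa}$ for all $a\in F$;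 it is globally defined if it is defined on every $1$-simplex of $\Sigma^\circ_*(K)$ (i.e. its domain is all of $\Sigma^\circ_*(K)$). *)

(* Defs.v *)
From HB Require Import structures.
From mathcomp Require Import all_boot all_order all_algebra.
From mathcomp Require Import all_classical all_reals all_analysis.
From mathcomp Require Import complex.
Set Implicit Arguments. Unset Strict Implicit. Unset Printing Implicit Defensive.
Import Order.TTheory GRing.Theory Num.Theory.
Local Open Scope ring_scope.
Local Open Scope classical_set_scope.

Record cstar_algebra (R : realType) := CstarAlgebra {
  ca_sort :> completeNormedModType R[i];
  ca_one : ca_sort;
  ca_mul : ca_sort -> ca_sort -> ca_sort;
  ca_star : ca_sort -> ca_sort;
  ca_mulA : associative ca_mul;
  ca_mul1l : left_id ca_one ca_mul;
  ca_mul1r : right_id ca_one ca_mul;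
  ca_mulDl : forall x y z, ca_mul (x + y) z = ca_mul x z + ca_mul y z;
  ca_mulDr : forall x y z, ca_mul x (y + z) = ca_mul x y + ca_mul x z;
  ca_mulZl : forall (c : R[i]) x y, ca_mul (c *: x) y = c *: ca_mul x y;
  ca_mulZr : forall (c : R[i]) x y, ca_mul x (c *: y) = c *: ca_mul x y;
  ca_starK : involutive ca_star;
  ca_starD : forall x y, ca_star (x + y) = ca_star x + ca_star y;
  ca_starZ : forall (c : R[i]) x, ca_star (c *: x) = c^* *: ca_star x;
  ca_starM : forall x y, ca_star (ca_mul x y) = ca_mul (ca_star y) (ca_star x);
  ca_normM : forall x y, `|ca_mul x y| <= `|x| * `|y|;
  ca_cstar : forall x, `|ca_mul (ca_star x) x| = `|x| ^+ 2
}.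

Section CStar.
Variable R : realType.

Definition star_hom (A B : cstar_algebra R) (f : A -> B) :=
  [/\ forall x y, f (x + y) = f x + f y,
      forall (c : R[i]) x, f (c *: x) = c *: f x,
      forall x y, f (ca_mul x y) = ca_mul (f x) (f y) &
      forall x, f (ca_star x) = ca_star (f x)].

Definition star_iso (A B : cstar_algebra R) (f : A -> B) :=
  star_hom f /\ bijective f.

Definition star_iso_on (A B : cstar_algebra R) (S : set A) (T : set B)
    (f : A -> B) :=
  [/\ set_bij S T f,
      forall x y, S x -> S y -> f (x + y) = f x + f y,
      forall (c : R[i]) x, S x -> f (c *: x) = c *: f x,
      forall x y, S x -> S y -> f (ca_mul x y) = ca_mul (f x) (f y) &
      forall x, S x -> f (ca_star x) = ca_star (f x)].

Definition cstar_subalg (A : cstar_algebra R) (S : set A) :=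
  [/\ S 0 /\ forall x y, S x -> S y -> S (x + y),
      forall (c : R[i]) x, S x -> S (c *: x),
      forall x y, S x -> S y -> S (ca_mul x y),
      forall x, S x -> S (ca_star x) &
      closed S].

Definition gen_cstar (A : cstar_algebra R) (X : set A) : set A :=
  \bigcap_(S in [set S : set A | cstar_subalg S /\ X `<=` S]) S.

(* nb_j o a is the *-isomorphism j_{oa} : A_a -> A_o; it is only        *)
(* constrained when le a o.                                            *)
Unset Implicit Arguments.
Record net_bundle (K : Type) (le : K -> K -> Prop) := NetBundle {
  nb_alg : K -> cstar_algebra R;
  nb_j : forall o a : K, nb_alg a -> nb_alg o;
  nb_j_iso : forall o a, le a o -> star_iso (nb_j o a);
  nb_j_comp : forall o a e, le e a -> le a o ->
      forall x, nb_j o a (nb_j a e x) = nb_j o e x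
}.
Set Implicit Arguments.
Arguments net_bundle {K} le.
Arguments nb_alg {K le} _ _.
Arguments nb_j {K le} _ _ _ _.

Variables (K : Type) (le : K -> K -> Prop).

(* triviality: isomorphic to a constant net bundle *)
Definition trivial_bundle (N : net_bundle le) :=
  exists (A0 : cstar_algebra R) (phi : forall o, nb_alg N o -> A0),
    (forall o, star_iso (phi o)) /\
    (forall o a, le a o -> forall x, phi o (nb_j N o a x) = phi a x).

Definition one_simplex (F : set K) (ot o : K) :=
  F !=set0 /\ (forall a, F a -> le a o /\ le a ot).

Definition net_sub (N : net_bundle le) (F : set K) (o : K) : set (nb_alg N o) :=
  gen_cstar [set y | exists a, F a /\ exists x, y = nb_j N o a x].
Arguments net_sub : clear implicits.

Definition cocycle_defined (N : net_bundle le) (F : set K) (ot o : K) :=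
  exists zeta : nb_alg N o -> nb_alg N ot,
    star_iso_on (net_sub N F o) (net_sub N F ot) zeta /\
    (forall a, F a -> forall x, zeta (nb_j N o a x) = nb_j N ot a x).

Definition cocycle_globally_defined (N : net_bundle le) :=
  forall F ot o, one_simplex F ot o -> cocycle_defined N F ot o.

End CStar.

Arguments net_bundle R {K} le.
Arguments nb_alg {R K le} n o.
Arguments nb_j {R K le} n o a _.
Arguments net_sub {R K le} N F o _.

(* The poset I of open intervals of S^1 (S^1 in R^2) whose closure is   *)
(* properly contained in S^1: the open arcs {(cos t, sin t) | a<t<a+l}  *)
(* with 0 < l < 2 pi, ordered by inclusion.                            *)
Definition S1arc (R : realType) (a l : R) : set (R * R) :=
  [set (cos t, sin t) | t in `]a, a + l[].

Definition is_S1interval (R : realType) (I : set (R * R)) :=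
  exists a l : R, 0 < l < 2 * pi /\ I = S1arc a l.

Definition S1interval (R : realType) := {I : set (R * R) | is_S1interval I}.

Definition S1interval_le (R : realType) (I J : S1interval R) : Prop :=
  proj1_sig I `<=` proj1_sig J.

(* Main.v *)
Require Import Defs.
From HB Require Import structures.
From mathcomp Require Import all_boot all_order all_algebra.
From mathcomp Require Import all_classical all_reals all_analysis.
From mathcomp Require Import complex.
From mathcomp Require Import ring lra.
Set Implicit Arguments. Unset Strict Implicit. Unset Printing Implicit Defensive.
Import Order.TTheory GRing.Theory Num.Theory.
Local Open Scope ring_scope.
Local Open Scope classical_set_scope.

Section Geo.
Variable R : realType.

Lemma trig_nat (n : nat) (x : R) :
  cos (x + 2 * pi * n%:R) = cos x /\ sin (x + 2 * pi * n%:R) = sin x.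
Proof.
elim: n => [|n [IHc IHs]]; first by rewrite mulr0 addr0.
have -> : x + 2 * pi * n.+1%:R = (x + 2 * pi * n%:R) + pi *+ 2.
  by rewrite -natr1 mulr2n; ring.
by rewrite cosD2pi sinD2pi.
Qed.

Lemma trig_int (k : int) (x : R) :
  cos (x + 2 * pi * k%:~R) = cos x /\ sin (x + 2 * pi * k%:~R) = sin x.
Proof.
case: k => n; first exact: trig_nat.
rewrite NegzE mulrNz mulrN.
have [h1 h2] := trig_nat n.+1 (x - 2 * pi * (n.+1)%:R).
by rewrite subrK in h1 h2; rewrite -h1 -h2.
Qed.

Definition subl (a l b m : R) :=
  exists k : int, b <= a + 2 * pi * k%:~R /\ a + 2 * pi * k%:~R + l <= b + m.

Lemma subl_sub a l b m : subl a l b m -> S1arc a l `<=` S1arc b m.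
Proof.
move=> [k [h1 h2]] _ [t /= ht <-].
have [hc hs] := trig_int k t.
exists (t + 2 * pi * k%:~R); last by rewrite hc hs.
move: ht; rewrite /= !in_itv /= => /andP[u1 u2]; apply/andP; split; lra.
Qed.

Lemma window (x a l : R) : 0 < l -> l < 2 * pi -> x <= a -> a + l <= x + 2 * pi ->
  exists b m, [/\ 0 < m < 2 * pi, b <= a, a + l <= b + m,
     b <= x + pi / 4 & x + 7 * pi / 4 <= b + m].
Proof.
move=> l0 l2 h1 h2; have p0 := @pi_gt0 R.
case: (lerP a (x + pi/4)) => c1; case: (lerP (x + 7 * pi / 4) (a + l)) => c2.
- exists a, l; split => //; apply/andP; split; lra.
- exists a, (x + 7 * pi / 4 - a); split; try lra; apply/andP; split; lra.
- exists (x + pi / 4), (a + l - (x + pi/4)); split; try lra; apply/andP; split; lra.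
- exists (x + pi / 4), (3 * pi / 2); split; try lra; apply/andP; split; lra.
Qed.

Lemma G1r (a l : R) : 0 < l < 2 * pi ->
  (exists b m, 0 < m < 2 * pi /\ subl a l b m /\ subl 0 (pi/2) b m /\ subl pi (pi/2) b m)
  \/ subl 0 (pi/2) a l \/ subl pi (pi/2) a l.
Proof.
move=> /andP[l0 l2]; have p0 := @pi_gt0 R.
set n := Num.floor ((a - 3 * pi / 4) / (2 * pi)).
have hn1 := floor_le ((a - 3 * pi / 4) / (2 * pi)).
have hn2 := floorD1_gt ((a - 3 * pi / 4) / (2 * pi)).
rewrite -/n intrD in hn2.
set N := (n%:~R : R) in hn1 hn2.
have ppos : 0 < 2 * (pi : R) by lra.
rewrite ler_pdivlMr // in hn1.
rewrite ltr_pdivrMr // in hn2.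
set x := 3 * pi / 4 + 2 * pi * N.
have hx1 : x <= a by rewrite /x; lra.
have hx2 : a < x + 2 * pi by rewrite /x; lra.
have en1 : ((n + 1)%:~R : R) = N + 1 by rewrite intrD.
have p0' : (0:R) < pi := p0.
case: (lerP (a + l) (x + 2 * pi)) => c1.
  have [b [m [hm hb1 hb2 hb3 hb4]]] := window l0 l2 hx1 c1.
  left; exists b, m; split => //; split; first by exists 0; rewrite mulr0 addr0; lra.
  split.
    exists (n + 1); rewrite en1; rewrite /x in hb3 hb4; split; lra.
  exists n; rewrite -/N; rewrite /x in hb3 hb4; split; lra.
case: (ltrP a (x + pi)) => c2.
  right; left; exists (n + 1); rewrite en1; rewrite /x in c1 c2 hx2 *; split; lra.
case: (ltrP (x + 3 * pi) (a + l)) => c3.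
  right; right; exists (n + 1); rewrite en1; rewrite /x in c1 c2 c3 hx2 *; split; lra.
have hx1' : x + pi <= a by [].
have c3' : a + l <= x + pi + 2 * pi by lra.
have [b [m [hm hb1 hb2 hb3 hb4]]] := window l0 l2 hx1' c3'.
left; exists b, m; split => //; split; first by exists 0; rewrite mulr0 addr0; lra.
split.
  exists (n + 1); rewrite en1; rewrite /x in hb3 hb4; split; lra.
exists (n + 1); rewrite en1; rewrite /x in hb3 hb4; split; lra.
Qed.

Lemma arcP (b m : R) : 0 < m < 2 * pi -> is_S1interval (S1arc b m).
Proof. by move=> h; exists b, m. Qed.

Definition arc (b m : R) (h : 0 < m < 2 * pi) : S1interval R :=
  exist _ (S1arc b m) (arcP b h).

Lemma r1P : (0 : R) < (pi : R) / 2 < 2 * (pi : R).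
Proof. have p0 := @pi_gt0 R; apply/andP; split; lra. Qed.

Definition r1 : S1interval R := @arc (0:R) (pi/2) r1P.
Definition r2 : S1interval R := @arc (pi:R) (pi/2) r1P.

Lemma G1 (c : S1interval R) :
  (exists u, S1interval_le c u /\ S1interval_le r1 u /\ S1interval_le r2 u)
  \/ S1interval_le r1 c \/ S1interval_le r2 c.
Proof.
case: c => I hI; case: (hI) => a [l [hl eI]]; subst I.
case: (G1r a hl) => [[b [m [hm [s1 [s2 s3]]]]]|[s|s]].
- left; exists (arc b hm); rewrite /S1interval_le /=; split; last split;
  exact: subl_sub.
- by right; left; rewrite /S1interval_le /=; apply: subl_sub.
- by right; right; rewrite /S1interval_le /=; apply: subl_sub.
Qed.

Lemma r12 : exists u, S1interval_le r1 u /\ S1interval_le r2 u.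
Proof.
have p0 := @pi_gt0 R.
have h : (0:R) < 3 * (pi:R) / 2 < 2 * (pi:R) by apply/andP; split; lra.
exists (arc 0 h); rewrite /S1interval_le /=; split; apply: subl_sub;
  exists 0; rewrite mulr0 addr0; split; lra.
Qed.

End Geo.
Section Alg.
Variable R : realType.

Definition finv (A B : Type) (a0 : A) (f : A -> B) (b : B) : A :=
  match pselect (exists a, f a = b) with
  | left h => proj1_sig (cid h)
  | right _ => a0 end.

Lemma finvE A B (a0 : A) (f : A -> B) b : (exists a, f a = b) -> f (finv a0 f b) = b.
Proof.
move=> h; rewrite /finv; case: pselect => [h'|//].
by case: cid.
Qed.

Lemma finvK A B (a0 : A) (f : A -> B) a : injective f -> finv a0 f (f a) = a.
Proof.
move=> fi; apply: fi; apply: finvE; by exists a.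
Qed.

Lemma iso_comp (A B C : cstar_algebra R) (f : A -> B) (g : B -> C) :
  star_iso f -> star_iso g -> star_iso (g \o f).
Proof.
move=> [[f1 f2 f3 f4] fb] [[g1 g2 g3 g4] gb]; split; last exact: bij_comp.
split=> *; by rewrite /= ?f1 ?f2 ?f3 ?f4 ?g1 ?g2 ?g3 ?g4.
Qed.

Lemma iso_inv (A B : cstar_algebra R) (f : A -> B) :
  star_iso f -> star_iso (finv 0 f).
Proof.
move=> [[f1 f2 f3 f4] fb].
have fi : injective f := bij_inj fb.
have fs : forall b, f (finv 0 f b) = b.
  move=> b; apply: finvE; case: fb => g _ gK; by exists (g b).
split; last by exists f => [b|a]; [exact: fs | rewrite finvK].
split=> *; apply: fi; by rewrite ?f1 ?f2 ?f3 ?f4 !fs.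
Qed.

Variables (K : Type) (le : K -> K -> Prop).
Hypothesis le_refl : forall x, le x x.
Variable N : net_bundle R le.

Notation j := (nb_j N).

Lemma jiso o a : le a o -> star_iso (j o a).
Proof. exact: (@nb_j_iso R K le N o a). Qed.

Lemma jcomp o a e : le e a -> le a o -> forall x, j o a (j a e x) = j o e x.
Proof. exact: (@nb_j_comp R K le N o a e). Qed.

Lemma j_inj o a : le a o -> injective (j o a).
Proof. by move=> h; case: (jiso h) => _ /bij_inj. Qed.

Lemma j_surj o a : le a o -> forall y, exists x, j o a x = y.
Proof. by move=> h y; case: (jiso h) => _ [g _ gK]; exists (g y). Qed.

Lemma indep (H : cocycle_globally_defined N) c c' u v :
  le c u -> le c' u -> le c v -> le c' v -> forall z,
  finv 0 (j u c) (j u c' z) = finv 0 (j v c) (j v c' z).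
Proof.
move=> cu c'u cv c'v z.
pose F := fun a => a = c \/ a = c'.
have hF : one_simplex le F v u.
  split; first by exists c; left.
  by move=> a [->|->].
have [zeta [_ hz]] := H F v u hF.
set y := finv 0 (j u c) (j u c' z).
have hy : j u c y = j u c' z by apply: finvE; apply: j_surj.
rewrite -(hz c' (or_intror erefl)) -hy (hz c (or_introl erefl)).
by rewrite finvK //; apply: j_inj.
Qed.

Definition ub x y := exists u, le x u /\ le y u.

Definition Tr x y : nb_alg N x -> nb_alg N y :=
  match pselect (ub x y) with
  | left h => fun z => finv 0 (j (proj1_sig (cid h)) y) (j (proj1_sig (cid h)) x z)
  | right _ => fun _ => 0 end.
Arguments Tr : clear implicits.

Hypothesis H : cocycle_globally_defined N.

Lemma TrE x y u : le x u -> le y u -> forall z, Tr x y z = finv 0 (j u y) (j u x z).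
Proof.
move=> xu yu z; rewrite /Tr; case: pselect => [h|[]]; last by exists u.
case: cid => w [xw yw] /=; exact: indep.
Qed.

Lemma Tr_iso x y : ub x y -> star_iso (Tr x y).
Proof.
move=> [u [xu yu]].
have -> : Tr x y = finv 0 (j u y) \o j u x by apply: funext => z; exact: TrE.
by apply: iso_comp; [apply: jiso | apply: iso_inv; apply: jiso].
Qed.

Lemma Tr_j a o : le a o -> forall z, Tr a o z = j o a z.
Proof.
move=> ao z; rewrite (TrE ao (le_refl o)).
rewrite -{1}(jcomp ao (le_refl o) z) finvK //; apply: (j_inj (le_refl o)).
Qed.

Lemma Tr_comp x y z u : le x u -> le y u -> le z u ->
  forall w, Tr y z (Tr x y w) = Tr x z w.
Proof.
move=> xu yu zu w; rewrite (TrE yu zu) (TrE xu zu) (TrE xu yu) finvE //.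
exact: j_surj.
Qed.

End Alg.
Theorem lemma5p11 (R : realType)
    (N : net_bundle R (@S1interval_le R)) :
  cocycle_globally_defined N -> trivial_bundle N.
Proof.
move=> H.
have lr : forall x : S1interval R, S1interval_le x x by move=> x t.
have lt : forall x y z : S1interval R, S1interval_le x y -> S1interval_le y z ->
    S1interval_le x z by move=> x y z h1 h2 t ht; apply: h2; apply: h1.
have nr2 : forall c, ~ ub (@S1interval_le R) c (r1 R) -> S1interval_le (r2 R) c.
  move=> c h; case: (G1 c) => [[u [cu [r1u _]]]|[r1c|//]].
    by case: h; exists u.
  by case: h; exists c.
pose T := @Tr R _ _ N.
pose psi (c : S1interval R) : nb_alg N c -> nb_alg N (r1 R) :=
  if pselect (ub (@S1interval_le R) c (r1 R)) then T c (r1 R)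
  else T (r2 R) (r1 R) \o T c (r2 R).
exists (nb_alg N (r1 R)), psi; split.
  move=> c; rewrite /psi; case: pselect => h; first exact: Tr_iso.
  apply: iso_comp; apply: (Tr_iso H).
    by exists c; split => //; apply: nr2.
  case: (r12 R) => u [h1 h2]; by exists u.
move=> o a ao x; rewrite /psi /T.
case: (pselect (ub _ o (r1 R))) => ho; case: (pselect (ub _ a (r1 R))) => ha /=.
- case: ho => u [ou r1u].
  by rewrite /= -(Tr_j lr H ao x) (Tr_comp H (lt _ _ _ ao ou) ou r1u).
- by case: ho => u [ou r1u]; exfalso; apply: ha; exists u; split => //; apply: (lt _ _ _ ao ou).
- have r2o := nr2 _ ho.
  have [v [av r1v r2v]] : exists v, [/\ S1interval_le a v, S1interval_le (r1 R) v
      & S1interval_le (r2 R) v].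
    case: (G1 a) => [[v [av [r1v r2v]]]|[r1a|r2a]].
    + by exists v.
    + by exfalso; apply: ho; exists o; split => //; apply: (lt _ _ _ r1a ao).
    + case: ha => u [au r1u]; exists u; split => //; apply: (lt _ _ _ r2a au).
  rewrite /= -(Tr_j lr H ao x) (Tr_comp H ao (lr o) r2o).
  by rewrite (Tr_comp H av r2v r1v).
- have r2o := nr2 _ ho.
  by rewrite /= -(Tr_j lr H ao x) (Tr_comp H ao (lr o) r2o).
Qed.
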